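(* Let $(k,|\cdot|)$ be an algebraically closed complete metrized field, $\mathbb{D}=\{|t|<1\}\subset k$, and let $P_t(z)=z^d+\alpha_1(t)z^{d-1}+\cdots+\alpha_d(t)$ with $d\ge2$ and $\alpha_i\in\mathcal{O}(\mathbb{D})[t^{-1}]$ (a meromorphic family of monic polynomials). Then there exist a constant $C>0$ and an integer $N\ge1$ such that the following holds: for every meromorphic function of the form $a(t)=t^{-l}(1+h(t))$ with $l\ge N$ an integer and $h$ analytic on $\mathbb{D}$ with $h(0)=0$ and $\sup_{\mathbb{D}}|h|\le\frac12$, one has $$\left|\frac1d\log|P_t(a(t))|-\log|a(t)|\right|\le C\quad\text{for all }0<|t|\le\tfrac12.$$
   Context: $\mathcal{O}(\mathbb{D})$ is the ring of analytic functions on $\mathbb{D}$ (power series converging on every disk of radius $\rho<1$); $\mathcal{O}(\mathbb{D})[t^{-1}]$ are meromorphic functions on $\mathbb{D}$ with poles only at $0$. *)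

(* Defs.v *)
From mathcomp Require Import all_boot all_order all_algebra.
From mathcomp Require Import reals exp.
Set Implicit Arguments. Unset Strict Implicit. Unset Printing Implicit Defensive.
Import Order.TTheory GRing.Theory Num.Theory.
Local Open Scope ring_scope.

Section ValuedField.
Variables (R : realType) (k : fieldType) (abs : k -> R).

Definition abs_value : Prop :=
  [/\ (forall x, 0 <= abs x),
      (forall x, abs x = 0 <-> x = 0),
      (forall x y, abs (x * y) = abs x * abs y) &
      (forall x y, abs (x + y) <= abs x + abs y)].

Definition converges_to (u : nat -> k) (l : k) : Prop :=
  forall e : R, 0 < e -> exists N : nat, forall n, (N <= n)%N -> abs (u n - l) < e.

Definition cauchy_seq (u : nat -> k) : Prop :=
  forall e : R, 0 < e -> exists N : nat,
    forall m n, (N <= m)%N -> (N <= n)%N -> abs (u m - u n) < e.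

Definition complete_abs : Prop :=
  forall u, cauchy_seq u -> exists l, converges_to u l.

(* f is in O(D): f is given on D = {|t| < 1} by a power series converging
   on every disk of radius rho < 1. *)
Definition analytic_D (f : k -> k) : Prop :=
  exists c : nat -> k,
    (forall rho : R, 0 < rho < 1 -> exists M : R, forall n, abs (c n) * rho ^+ n <= M)
    /\ (forall t, abs t < 1 -> converges_to (fun n => \sum_(i < n) c i * t ^+ i) (f t)).

Definition meromorphic_D0 (f : k -> k) : Prop :=
  exists (m : nat) (g : k -> k), analytic_D g /\
    (forall t, 0 < abs t < 1 -> f t = g t / t ^+ m).

End ValuedField.

(* Main.v *)
Require Import Defs.
From mathcomp Require Import all_boot all_order all_algebra.
From mathcomp Require Import reals exp ring lra.
Import Order.TTheory GRing.Theory Num.Theory.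
Local Open Scope ring_scope.

Section AbsLemmas.
Variables (R : realType) (k : fieldType) (abs : k -> R) (habs : abs_value abs).

Lemma abs_ge0 x : 0 <= abs x. Proof. by case: habs. Qed.
Lemma abs0 : abs 0 = 0. Proof. by case: habs => _ H _ _; apply H. Qed.
Lemma absM x y : abs (x * y) = abs x * abs y. Proof. by case: habs. Qed.
Lemma absD x y : abs (x + y) <= abs x + abs y. Proof. by case: habs. Qed.
Lemma abs_eq0 x : abs x = 0 -> x = 0. Proof. by case: habs => _ H _ _; apply H. Qed.

Lemma abs1 : abs 1 = 1.
Proof.
have h1 : abs 1 != 0 by apply/eqP => /abs_eq0 /eqP; rewrite oner_eq0.
have : abs 1 * (abs 1 - 1) = 0 by rewrite mulrBr mulr1 -absM mulr1 subrr.
by move/eqP; rewrite mulf_eq0 (negPf h1) /= subr_eq0 => /eqP.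
Qed.

Lemma absN1 : abs (-1) = 1.
Proof.
have h0 := abs_ge0 (-1).
have : (abs (-1) - 1) * (abs (-1) + 1) = 0.
  by rewrite -subr_sqr expr2 -absM mulrNN mulr1 abs1 expr1n subrr.
move/eqP; rewrite mulf_eq0 => /orP [/eqP|/eqP]; first by move=> H; lra.
move=> H; lra.
Qed.

Lemma absN x : abs (- x) = abs x.
Proof. by rewrite -mulN1r absM absN1 mul1r. Qed.

Lemma absX x n : abs (x ^+ n) = abs x ^+ n.
Proof. elim: n => [|n IH]; first by rewrite !expr0 abs1. by rewrite !exprS absM IH. Qed.

Lemma absV x : x != 0 -> abs (x^-1) = (abs x)^-1.
Proof.
move=> x0.
have ax : abs x != 0 by apply/eqP => /abs_eq0 /eqP; rewrite (negPf x0).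
by apply: (mulfI ax); rewrite -absM !mulfV // abs1.
Qed.

Lemma abs_subl x y : abs x - abs y <= abs (x + y).
Proof.
have := absD (x + y) (- y); rewrite addrK absN => H; lra.
Qed.

Lemma abs_sum (I : Type) (r : seq I) (P : pred I) (F : I -> k) :
  abs (\sum_(i <- r | P i) F i) <= \sum_(i <- r | P i) abs (F i).
Proof.
apply: (big_ind2 (fun x y => abs x <= y)); first by rewrite abs0.
  by move=> x1 x2 y1 y2 H1 H2; apply: le_trans (absD _ _) _; apply: lerD.
by [].
Qed.

Lemma geom_sum n : \sum_(i < n) (2/3 : R) ^+ i = 3 - 3 * (2/3) ^+ n.
Proof.
elim: n => [|n IH]; first by rewrite big_ord0 expr0; lra.
rewrite big_ord_recr /= IH exprS; lra.
Qed.

Lemma analytic_bound g : analytic_D abs g ->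
  exists K : R, 0 <= K /\ forall t, abs t <= 2^-1 -> abs (g t) <= K.
Proof.
case=> c [Hc Hconv].
have [M HM] : exists M : R, forall n, abs (c n) * (3/4) ^+ n <= M.
  by apply: Hc; lra.
have M0 : 0 <= M by apply: le_trans (HM 0%N); rewrite expr0 mulr1 abs_ge0.
exists (3 * M + 1); split; first lra.
move=> t Ht.
have [N HN] := Hconv t ltac:(lra) 1 ltr01.
have := HN N (leqnn N).
set S := \sum_(i < N) _.
move=> HS.
have HSb : abs S <= 3 * M.
  rewrite /S; apply: le_trans; first exact: abs_sum.
  apply: (@le_trans _ _ (\sum_(i < N) M * (2/3) ^+ i)).
    apply: ler_sum => i _.
    rewrite absM absX.
    apply: (@le_trans _ _ (abs (c i) * (3/4 * (2/3)) ^+ i)).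
      apply: ler_wpM2l; first exact: abs_ge0.
      apply: lerXn2r; rewrite ?nnegrE ?abs_ge0 //; lra.
    by rewrite exprMn mulrA ler_wpM2r // exprn_ge0 //; lra.
  rewrite -mulr_sumr geom_sum.
  have : 0 <= (2/3 : R) ^+ N by apply: exprn_ge0; lra.
  move=> H; nra.
have := absD S (g t - S); rewrite addrC subrK.
have : abs (g t - S) = abs (S - g t) by rewrite -absN opprB.
move=> ->; lra.
Qed.


Lemma mero_bound f : meromorphic_D0 abs f ->
  exists (K : R) (m : nat), 0 <= K /\
    forall t, 0 < abs t <= 2^-1 -> abs (f t) * abs t ^+ m <= K.
Proof.
case=> m [g [Hg Hf]].
have [K [K0 HK]] := @analytic_bound g Hg.
exists K, m; split => // t /andP [t0 t1].
have tn0 : t != 0 by apply/eqP => e; move: t0; rewrite e abs0 ltxx.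
rewrite Hf; last by apply/andP; split => //; lra.
rewrite absM absV ?expf_neq0 // absX -mulrA mulVf ?mulr1; first exact: HK.
by rewrite expf_neq0 // gt_eqF.
Qed.

Lemma unif_bound (alpha : nat -> k -> k) d :
  (forall i, (1 <= i <= d)%N -> meromorphic_D0 abs (alpha i)) ->
  forall n, (n <= d)%N -> exists (K : R) (m : nat), 0 <= K /\
    forall i, (1 <= i <= n)%N ->
    forall t, 0 < abs t <= 2^-1 -> abs (alpha i t) * abs t ^+ m <= K.
Proof.
move=> Ha; elim=> [|n IH] Hn.
  by exists 0, 0%N; split => // i /andP [H1 H2]; move: (leq_trans H1 H2).
have [K1 [m1 [K10 H1]]] := IH (ltnW Hn).
have /mero_bound [K2 [m2 [K20 H2]]] : meromorphic_D0 abs (alpha n.+1).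
  by apply: Ha; rewrite Hn andbT.
exists (K1 + K2), (m1 + m2)%N; split; first lra.
move=> i /andP [i1 i2] t Ht.
have x0 : 0 <= abs t := abs_ge0 t.
have x1 : abs t <= 1 by case/andP: Ht => _ H; lra.
have a0 := abs_ge0 (alpha i t).
rewrite exprD mulrA.
case: (ltngtP i n.+1) i2 => // [Hi|->] _.
  have := H1 i ltac:(by rewrite i1 -ltnS Hi) t Ht.
  have := exprn_ile1 m2 x0 x1; have := exprn_ge0 m2 x0.
  have := mulr_ge0 a0 (exprn_ge0 m1 x0).
  move=> p q r s; nra.
rewrite mulrAC.
have := H2 t Ht.
have := exprn_ile1 m1 x0 x1; have := exprn_ge0 m1 x0.
have := mulr_ge0 (abs_ge0 (alpha n.+1 t)) (exprn_ge0 m2 x0).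
move=> p q r s; nra.
Qed.

End AbsLemmas.
Arguments abs_ge0 {R k abs}.
Arguments abs0 {R k abs}.
Arguments absM {R k abs}.
Arguments absD {R k abs}.
Arguments abs_eq0 {R k abs}.
Arguments abs1 {R k abs}.
Arguments absN1 {R k abs}.
Arguments absN {R k abs}.
Arguments absX {R k abs}.
Arguments absV {R k abs}.
Arguments abs_subl {R k abs}.
Arguments abs_sum {R k abs}.
Arguments analytic_bound {R k abs}.
Arguments mero_bound {R k abs}.
Arguments unif_bound {R k abs}.


Lemma ln_bound (R : realType) (r : R) : 2^-1 <= r <= 3/2 -> `| ln r | <= 1.
Proof.
case/andP => r1 r2.
have r0 : 0 < r by lra.
have H1 : forall x : R, 0 < x -> ln x <= x - 1.
  move=> x x0; have := expR_ge1Dx (ln x); rewrite lnK ?posrE //; lra.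
have := H1 r r0.
have := H1 r^-1 ltac:(by rewrite invr_gt0).
rewrite lnV ?posrE //.
have : r^-1 <= 2.
  rewrite -[2]invrK lef_pV2 ?posrE //; lra.
move=> a b c; rewrite ler_norml; apply/andP; split; lra.
Qed.

Theorem lemma2p1 (R : realType) (k : closedFieldType) (abs : k -> R)
  (habs : abs_value abs) (hcomp : complete_abs abs)
  (d : nat) (hd : (2 <= d)%N) (alpha : nat -> k -> k)
  (halpha : forall i, (1 <= i <= d)%N -> meromorphic_D0 abs (alpha i)) :
  exists C : R, 0 < C /\ exists N : nat, (1 <= N)%N /\
    forall (l : nat) (h : k -> k), (N <= l)%N ->
      analytic_D abs h -> h 0 = 0 -> (forall t, abs t < 1 -> abs (h t) <= 2^-1) ->
      forall t : k, 0 < abs t <= 2^-1 ->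
        let a := t ^- l * (1 + h t) in
        let Pa := a ^+ d + \sum_(1 <= i < d.+1) alpha i t * a ^+ (d - i) in
        Pa != 0 /\ `| d%:R^-1 * ln (abs Pa) - ln (abs a) | <= C.
Proof.
have [K [m [K0 HK]]] := unif_bound habs alpha d halpha d (leqnn d).
have d0 : (0 < d%:R :> R) by rewrite ltr0n; apply: leq_trans hd.
set B := 4 * d%:R * K.
have B0 : 0 <= B by rewrite /B; apply: mulr_ge0 => //; apply: mulr_ge0 => //; lra.
pose n0 := Num.Def.archi_bound B.
have Hn0 : B <= 2 ^+ n0.
  apply: le_trans (ltW (archi_boundP B0)) _.
  rewrite -natrX ler_nat; exact: ltnW (ltn_expl _ (isT : (1 < 2)%N)).
exists 1; split; first exact: ltr01.
exists (m + n0).+1; split => //.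
move=> l h Hl _ _ hb t /andP [t0 t1] a Pa.
have tn0 : t != 0 by apply/eqP => e; move: t0; rewrite e (abs0 habs) ltxx.
set x := abs t in t0 t1.
set y := x^-1.
have y2 : 2 <= y by rewrite /y -[2]invrK lef_pV2 ?posrE //; lra.
have hb' := hb t ltac:(rewrite -/x; lra).
set u := abs (1 + h t).
have u1 : 2^-1 <= u.
  have := abs_subl habs 1 (h t); rewrite (abs1 habs) -/u; lra.
have u2 : u <= 3/2.
  have := absD habs 1 (h t); rewrite (abs1 habs) -/u; lra.
set A := abs a.
have HA : A = y ^+ l * u.
  by rewrite /A /a (absM habs) (absV habs) ?expf_neq0 // (absX habs) exprVn.
have yl : 2 ^+ l <= y ^+ l by apply: lerXn2r; rewrite ?nnegrE //; lra.
have y0 : 0 <= y by lra.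
have l1 : (1 <= l)%N by apply: leq_trans Hl.
have yly : y <= y ^+ l.
  by rewrite -{1}(expr1 y); apply: ler_weXn2l => //; lra.
have A1 : 1 <= A by rewrite HA; nra.
have A0 : 0 < A by lra.
have Kb : K * y ^+ m * (2 * d%:R) <= A.
  have h1 : 2 ^+ n0 <= y ^+ n0 by apply: lerXn2r; rewrite ?nnegrE //; lra.
  have h2 : y ^+ m * y ^+ n0 <= y ^+ l.
    rewrite -exprD; apply: ler_weXn2l; first lra.
    exact: ltnW.
  have h3 : 0 <= y ^+ m by apply: exprn_ge0.
  have h4 : B * y ^+ m <= y ^+ l.
    apply: le_trans h2; rewrite mulrC; apply: ler_wpM2l => //; lra.
  rewrite HA; move: h4; rewrite /B => h4; nra.
have Hterm : forall i, (1 <= i < d.+1)%N ->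
    abs (alpha i t * a ^+ (d - i)) <= A ^+ d / (2 * d%:R).
  move=> i /andP [i1 i2].
  have i3 : (i <= d)%N by [].
  have := HK i ltac:(by rewrite i1 i3) t ltac:(by rewrite t0 t1).
  rewrite -/x (absM habs) (absX habs) -/A => Hi.
  have Hal : abs (alpha i t) <= K * y ^+ m.
    have xm : 0 < x ^+ m by apply: exprn_gt0.
    by rewrite /y exprVn ler_pdivlMr.
  have Ad : A * A ^+ (d - i) <= A ^+ d.
    rewrite -exprS; apply: ler_weXn2l => //.
    by rewrite ltn_subrL i1 /=; apply: leq_trans i3.
  rewrite ler_pdivlMr; last by apply: mulr_gt0 => //; lra.
  have e0 := abs_ge0 habs (alpha i t).
  have e1 : 0 <= A ^+ (d - i) by apply: exprn_ge0; lra.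
  have : abs (alpha i t) * (2 * d%:R) <= A.
    apply: le_trans Kb; apply: ler_wpM2r => //; lra.
  move=> H; nra.
have HS : abs (\sum_(1 <= i < d.+1) alpha i t * a ^+ (d - i)) <= A ^+ d / 2.
  apply: le_trans; first exact: (abs_sum habs).
  apply: (@le_trans _ _ (\sum_(1 <= i < d.+1) A ^+ d / (2 * d%:R))).
    rewrite big_nat_cond [X in _ <= X]big_nat_cond; apply: ler_sum => i /andP [Hi _].
    exact: Hterm.
  rewrite sumr_const_nat subn1 /= -mulr_natr le_eqVlt; apply/orP; left; apply/eqP.
  field; rewrite gt_eqF //.
have Ad0 : 0 < A ^+ d by apply: exprn_gt0.
have Pa1 : A ^+ d / 2 <= abs Pa.
  have := abs_subl habs (a ^+ d) (\sum_(1 <= i < d.+1) alpha i t * a ^+ (d - i)).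
  rewrite (absX habs) -/A -/Pa; lra.
have Pa2 : abs Pa <= A ^+ d * (3/2).
  have := absD habs (a ^+ d) (\sum_(1 <= i < d.+1) alpha i t * a ^+ (d - i)).
  rewrite (absX habs) -/A -/Pa; lra.
have P0 : 0 < abs Pa by lra.
split.
  by apply/eqP => e; move: P0; rewrite e (abs0 habs) ltxx.
set P := abs Pa in Pa1 Pa2 P0 *.
set r := P / A ^+ d.
have HP : P = A ^+ d * r by rewrite /r mulrC divfK // gt_eqF.
have r1 : 2^-1 <= r <= 3/2.
  rewrite /r ler_pdivlMr // ler_pdivrMr //; apply/andP; split; lra.
have r0 : 0 < r by lra.
rewrite HP lnM ?posrE // lnXn //.
have E : d%:R^-1 * (ln A *+ d + ln r) - ln A = d%:R^-1 * ln r.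
  rewrite -mulr_natr; field; rewrite gt_eqF //.
rewrite E normrM ger0_norm; last by rewrite invr_ge0 ltW.
have hl := @ln_bound R r r1.
have dv : d%:R^-1 <= (1 : R).
  by rewrite invf_le1 // ler1n; apply: leq_trans hd.
have := normr_ge0 (ln r).
have : 0 <= d%:R^-1 :> R by rewrite invr_ge0 ltW.
move=> p q.
apply: le_trans (ler_wpM2r q dv) _; by rewrite mul1r.
Qed.
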